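(* In the setting of the addition algorithm, for every $\varphi\in\mathbb{R}^V$ with $M(\varphi)\le L(\tau,\varepsilon)$, $$\sqrt{J^+(\varphi)J^-(\varphi)}\ge\exp\Big(-\frac{1}{\varepsilon^2}\sum_{v\in V}\tau'\big(v,1+\max_{w\sim v}r(\varphi,w)\big)^2\Big).$$
   Context: Addition algorithm. Let $G=(V,E)$ be a finite connected graph ($v\sim w$ means $(v,w)\in E$), $\tau:V\to[0,\infty)$, $0<\varepsilon\le1/2$, and fix a total order $\preceq$ on $V$. Let $f:\mathbb{R}\to\mathbb{R}$ be $f(x)=0$ for $|x|\ge1$, $f(x)=(1+x)/\varepsilon$ on $[-1,-1+\varepsilon]$, $f(x)=1$ on $[-1+\varepsilon,1-\varepsilon]$, $f(x)=(1-x)/\varepsilon$ on $[1-\varepsilon,1]$. For $v\in V$, $h,t\in\mathbb{R}$ let $m_{v,h,t}(h')=\min(\tau(v)-t,\varepsilon/2)f(h'-h)+t$ if $\tau(v)\ge t$, and $m_{v,h,t}(h')=t$ if $\tau(v)<t$. On input $\varphi\in\mathbb{R}^V$ the algorithm outputs an ordering $P_1,\dots,P_{|V|}$ of $V$, numbers $s_k$ and functions $\tau_k:V\times\mathbb{R}\to\mathbb{R}$: set $\tau_1(v,h)=\tau(v)$; for $k=1,\dots,|V|$: let $P_k$ be the vertex $v\in V\setminus\{P_1,\dots,P_{k-1}\}$ minimizing $\tau_k(v,\varphi_v)$ (ties broken by taking the $\preceq$-smallest); set $s_k=\tau_k(P_k,\varphi_{P_k})$; if $k<|V|$ set $\tau_{k+1}(v,h)=\tau_k(v,h)$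 if $v\in\{P_1,\dots,P_k\}$ or $v\not\sim P_k$, and $\tau_{k+1}(v,h)=\min(\tau_k(v,h),m_{v,\varphi_{P_k},s_k}(h))$ otherwise. Define $T^+(\varphi)_{P_k}=\varphi_{P_k}+s_k$ ($1\le k\le|V|$) and $T^-(\varphi)=2\varphi-T^+(\varphi)$. Each $\tau_k(v,\cdot)$ is right-differentiable with Lipschitz constant at most $1/2$; $\partial_2\tau_k$ denotes the right derivative in the second variable. $J^+(\varphi):=\prod_{k=1}^{|V|}(1+\partial_2\tau_k(P_k,\varphi_{P_k}))$, $J^-(\varphi):=\prod_{k=1}^{|V|}(1-\partial_2\tau_k(P_k,\varphi_{P_k}))$. $d_G$ is graph distance; $\tau'(v,k):=\max\{\tau(v)-\tau(w):d_G(v,w)\le k\}$; $L(\tau,\varepsilon):=\sup\{k\ge0:\tau'(v,k)\le\varepsilon/2\ \forall v\}-1$ (possibly $+\infty$). $\mathcal{E}(\varphi):=\{(v,w)\in E:|\varphi_v-\varphi_w|\ge1-\varepsilon\}$; $v\leftrightarrow w$ if connected by edges of $\mathcal{E}(\varphi)$ (including $v=w$); $r(\varphi,v):=\max\{d_G(v,w):v\leftrightarrow w\}$, $M(\varphi):=\max\{d_G(v,w):v\leftrightarrow w\}$. *)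

(* Defs.v *)
From Stdlib Require Import Reals ClassicalEpsilon.
From mathcomp Require Import all_boot.

Set Implicit Arguments.
Unset Strict Implicit.
Unset Printing Implicit Defensive.

Local Open Scope R_scope.

Definition is_rderiv (g : R -> R) (x l : R) : Prop :=
  forall e, 0 < e -> exists d, 0 < d /\
    forall h, 0 < h < d -> Rabs ((g (x + h) - g x) / h - l) < e.

(* the right derivative of g at x (chosen by classical choice; it is unique
   whenever it exists) *)
Definition rderiv (g : R -> R) (x : R) : R :=
  epsilon (inhabits 0) (is_rderiv g x).

Definition ftent (eps x : R) : R :=
  if Rle_dec 1 (Rabs x) then 0
  else if Rle_dec x (-1 + eps) then (1 + x) / eps
  else if Rle_dec x (1 - eps) then 1
  else (1 - x) / eps.

Section Addition.
Variables (V : finType) (adj : rel V) (tau : V -> R) (eps : R) (rk : V -> nat).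

Definition mfun (v : V) (h t h' : R) : R :=
  if Rle_dec t (tau v) then Rmin (tau v - t) (eps / 2) * ftent eps (h' - h) + t
  else t.

Definition better (g : V -> R) (v w : V) : bool :=
  if Rlt_dec (g v) (g w) then true
  else if Req_EM_T (g v) (g w) then (rk v <= rk w)%N else false.

Definition argminV (g : V -> R) (s : seq V) : option V :=
  foldl (fun acc v => match acc with
                      | None => Some v
                      | Some a => if better g v a then Some v else Some a
                      end) None s.

Variable phi : V -> R.

(* run of the addition algorithm: returns the list of pairs (P_k, tau_k), k = 1.. *)
Fixpoint run (fuel : nat) (chosen : seq V) (tk : V -> R -> R)
  : seq (V * (V -> R -> R)) :=
  match fuel with
  | 0 => [::]
  | n.+1 =>
    match argminV (fun v => tk v (phi v)) [seq v <- enum V | v \notin chosen] with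
    | None => [::]
    | Some P =>
      let s := tk P (phi P) in
      let chosen' := rcons chosen P in
      (P, tk) :: run n chosen'
        (fun v h => if (v \in chosen') || ~~ adj v P then tk v h
                    else Rmin (tk v h) (mfun v (phi P) s h))
    end
  end.

Definition alg_run : seq (V * (V -> R -> R)) :=
  run #|V| [::] (fun v _ => tau v).

Definition Jplus : R :=
  \big[Rmult/1]_(x <- alg_run) (1 + rderiv (x.2 x.1) (phi x.1)).
Definition Jminus : R :=
  \big[Rmult/1]_(x <- alg_run) (1 - rderiv (x.2 x.1) (phi x.1)).

End Addition.

Section Graph.
Variables (V : finType) (adj : rel V).

Fixpoint ball (k : nat) (v : V) : {set V} :=
  match k with
  | 0 => [set v]
  | k'.+1 => ball k' v :|: [set w | [exists u in ball k' v, adj u w]]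
  end.

(* graph distance d_G (for a connected graph) *)
Definition distG (v w : V) : nat :=
  find (fun k => w \in ball k v) (iota 0 #|V|).

Definition tau' (tau : V -> R) (v : V) (k : nat) : R :=
  \big[Rmax/0]_(w | w \in ball k v) (tau v - tau w).

Definition Erel (eps : R) (phi : V -> R) : rel V :=
  fun v w => adj v w && (if Rle_dec (1 - eps) (Rabs (phi v - phi w)) then true else false).

Definition linked (eps : R) (phi : V -> R) (v w : V) : bool :=
  connect (Erel eps phi) v w.

Definition rad (eps : R) (phi : V -> R) (v : V) : nat :=
  \max_(w | linked eps phi v w) distG v w.

Definition Mmax (eps : R) (phi : V -> R) : nat :=
  \max_(v : V) \max_(w | linked eps phi v w) distG v w.

End Graph.

(* Main.v *)
Require Import Defs.
From HB Require Import structures.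
From Stdlib Require Import Reals Lra Lia ClassicalEpsilon.
From mathcomp Require Import all_boot zify.

Set Implicit Arguments.
Unset Strict Implicit.
Local Open Scope R_scope.


Definition RL (g : R -> R) (x l : R) : Prop :=
  exists d, 0 < d /\ forall h, 0 < h < d -> g (x + h) = g x + l * h.

Lemma RL_rderiv g x l : RL g x l -> is_rderiv g x l.
Proof.
move=> [d [d0 Hd]] e e0; exists d; split=> // h Hh.
rewrite Hd //. replace ((g x + l * h - g x) / h - l) with 0.
  by rewrite Rabs_R0.
field; lra.
Qed.

Lemma rderiv_uniq g x l1 l2 : is_rderiv g x l1 -> is_rderiv g x l2 -> l1 = l2.
Proof.
move=> H1 H2; apply: NNPP => Hne.
have e0 : 0 < Rabs (l1 - l2) / 2.
  apply: Rdiv_lt_0_compat; last lra. apply: Rabs_pos_lt. lra.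
have [d1 [d10 Hd1]] := H1 _ e0.
have [d2 [d20 Hd2]] := H2 _ e0.
pose h := Rmin d1 d2 / 2.
have hm : 0 < Rmin d1 d2 by apply: Rmin_pos.
have Hh1 : 0 < h < d1 by rewrite /h; have := Rmin_l d1 d2; lra.
have Hh2 : 0 < h < d2 by rewrite /h; have := Rmin_r d1 d2; lra.
have A := Hd1 _ Hh1; have B := Hd2 _ Hh2.
set q := (g (x + h) - g x) / h in A B.
have : Rabs (l1 - l2) <= Rabs (q - l2) + Rabs (q - l1).
  replace (l1 - l2) with ((q - l2) - (q - l1)) by ring.
  apply: Rabs_triang_inv2 || (eapply Rle_trans; [apply Rabs_triang|]; rewrite Rabs_Ropp; lra).
lra.
Qed.

Lemma rderiv_RL g x l : RL g x l -> rderiv g x = l.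
Proof.
move=> H; have Hd := RL_rderiv H.
rewrite /rderiv. have := epsilon_spec (inhabits 0) (is_rderiv g x) (ex_intro _ l Hd).
move=> H2; exact: rderiv_uniq H2 Hd.
Qed.

Lemma RL_const c x : RL (fun _ => c) x 0.
Proof. exists 1; split; [lra|] => h _; ring. Qed.

Lemma RL_min g1 g2 x l1 l2 : RL g1 x l1 -> RL g2 x l2 ->
  RL (fun y => Rmin (g1 y) (g2 y)) x l1 \/ RL (fun y => Rmin (g1 y) (g2 y)) x l2.
Proof.
move=> [d1 [d10 H1]] [d2 [d20 H2]].
have dm : 0 < Rmin d1 d2 by apply: Rmin_pos.
have Hm1 := Rmin_l d1 d2; have Hm2 := Rmin_r d1 d2.
have Ha : 0 < Rabs (l1 - l2) + 1 by have := Rabs_pos (l1 - l2); lra.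
have Hb : forall h, (l1 - l2) * h <= Rabs (l1 - l2) * Rabs h.
  move=> h; rewrite -Rabs_mult; apply: RRle_abs.
case: (Rtotal_order (g1 x) (g2 x)) => [Hlt|[Heq|Hgt]].
- left. pose D := (g2 x - g1 x) / (Rabs (l1 - l2) + 1).
  have D0 : 0 < D by apply: Rdiv_lt_0_compat; lra.
  exists (Rmin (Rmin d1 d2) D); split; first by apply: Rmin_pos.
  move=> h Hh. have := Rmin_l (Rmin d1 d2) D; have := Rmin_r (Rmin d1 d2) D => ? ?.
  rewrite H1; last lra. rewrite H2; last lra.
  have hD : h * (Rabs (l1 - l2) + 1) < g2 x - g1 x.
    have : h < D by lra. rewrite /D => hh.
    apply (Rmult_lt_compat_r (Rabs (l1 - l2) + 1)) in hh => //.
    by rewrite /Rdiv Rmult_assoc Rinv_l ?Rmult_1_r in hh; lra.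
  have Hbb : (l1 - l2) * h <= Rabs (l1 - l2) * h.
    have := Hb h; rewrite (Rabs_pos_eq h) //; lra.
  rewrite Rmin_left ?Rmin_left //; lra.
- have Hc : forall h, 0 < h -> Rmin (g1 x + l1 * h) (g2 x + l2 * h) = g1 x + Rmin l1 l2 * h.
    move=> h h0; rewrite Heq; rewrite /Rmin.
    case: Rle_dec; case: Rle_dec => ? ?; try lra; try nra.
  case: (Rle_dec l1 l2) => Hl.
  + left; exists (Rmin d1 d2); split; first by []. move=> h Hh.
    have e1 : g1 (x + h) = g1 x + l1 * h by apply: H1; lra.
    have e2 : g2 (x + h) = g2 x + l2 * h by apply: H2; lra.
    rewrite e1 e2 Hc; last lra.
    have m1 : Rmin (g1 x) (g2 x) = g1 x by rewrite Heq; apply: Rmin_left; lra.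
    have m2 : Rmin l1 l2 = l1 by apply: Rmin_left; lra.
    by rewrite m1 m2.
  + right; exists (Rmin d1 d2); split; first by []. move=> h Hh.
    have e1 : g1 (x + h) = g1 x + l1 * h by apply: H1; lra.
    have e2 : g2 (x + h) = g2 x + l2 * h by apply: H2; lra.
    rewrite e1 e2 Hc; last lra.
    have m1 : Rmin (g1 x) (g2 x) = g1 x by rewrite Heq; apply: Rmin_left; lra.
    have m2 : Rmin l1 l2 = l2 by apply: Rmin_right; lra.
    by rewrite m1 m2.
- right. pose D := (g1 x - g2 x) / (Rabs (l1 - l2) + 1).
  have D0 : 0 < D by apply: Rdiv_lt_0_compat; lra.
  exists (Rmin (Rmin d1 d2) D); split; first by apply: Rmin_pos.
  move=> h Hh. have := Rmin_l (Rmin d1 d2) D; have := Rmin_r (Rmin d1 d2) D => ? ?.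
  rewrite H1; last lra. rewrite H2; last lra.
  have hD : h * (Rabs (l1 - l2) + 1) < g1 x - g2 x.
    have : h < D by lra. rewrite /D => hh.
    apply (Rmult_lt_compat_r (Rabs (l1 - l2) + 1)) in hh => //.
    by rewrite /Rdiv Rmult_assoc Rinv_l ?Rmult_1_r in hh; lra.
  have : - ((l1 - l2) * h) <= Rabs (l1 - l2) * h.
    have := RRle_abs (- ((l1 - l2) * h)). rewrite Rabs_Ropp Rabs_mult (Rabs_pos_eq h); lra.
  move=> Hbb.
  rewrite Rmin_right ?Rmin_right //; lra.
Qed.


Ltac absc := repeat match goal with
  | |- context [Rabs ?z] => let H := fresh in destruct (Rcase_abs z) as [H|H];
        [rewrite (Rabs_left z H) | rewrite (Rabs_right z H)]
  | H : context [Rabs ?z] |- _ => let H' := fresh in destruct (Rcase_abs z) as [H'|H'];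
        [rewrite (Rabs_left z H') in H | rewrite (Rabs_right z H') in H]
  end.

Section F.
Variable e : R.
Hypothesis e0 : 0 < e.
Hypothesis e2 : e <= 1/2.

Lemma f_out z : 1 <= Rabs z -> ftent e z = 0.
Proof. by move=> H; rewrite /ftent; case: Rle_dec. Qed.

Lemma f_l z : -1 <= z <= -1 + e -> ftent e z = (1 + z) / e.
Proof.
move=> H; rewrite /ftent; case: Rle_dec => /= H1.
  have : z = -1 by absc; lra. move=> ->; field; lra.
case: Rle_dec => // H2; lra.
Qed.

Lemma f_m z : -1 + e <= z <= 1 - e -> ftent e z = 1.
Proof.
move=> H; rewrite /ftent; case: Rle_dec => /= H1.
  absc; lra.
case: Rle_dec => /= H2.
  have : z = -1 + e by lra. move=> ->; field; lra.
case: Rle_dec => // H3; lra.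
Qed.

Lemma f_r z : 1 - e <= z <= 1 -> ftent e z = (1 - z) / e.
Proof.
move=> H; rewrite /ftent; case: Rle_dec => /= H1.
  have : z = 1 by absc; lra. move=> ->; field; lra.
case: Rle_dec => /= H2; first lra.
case: Rle_dec => /= H3 //.
have : z = 1 - e by lra. move=> ->; field; lra.
Qed.

Lemma ftent_RL y : exists l, RL (ftent e) y l /\
  (l = 0 \/ (1 - e <= Rabs y <= 1 /\ Rabs l = 1 / e)).
Proof.
have ie : 0 < 1 / e by apply: Rdiv_lt_0_compat; lra.
case: (Rlt_le_dec y (-1)) => Hy1.
  exists 0; split; last by left.
  exists (-1 - y); split; first lra. move=> h Hh.
  rewrite !f_out; try (absc; lra); try (field; lra).
case: (Rlt_le_dec y (-1 + e)) => Hy2.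
  exists (1 / e); split; last first.
    right; split; first (absc; lra). by rewrite Rabs_right; lra.
  exists (-1 + e - y); split; first lra. move=> h Hh.
  rewrite !f_l; try lra; try (field; lra).
case: (Rlt_le_dec y (1 - e)) => Hy3.
  exists 0; split; last by left.
  exists (1 - e - y); split; first lra. move=> h Hh.
  rewrite !f_m; try lra; try (field; lra).
case: (Rlt_le_dec y 1) => Hy4.
  exists (- (1 / e)); split; last first.
    right; split; first (absc; lra). by rewrite Rabs_Ropp Rabs_right; lra.
  exists (1 - y); split; first lra. move=> h Hh.
  rewrite !f_r; try lra; try (field; lra).
exists 0; split; last by left.
exists 1; split; first lra. move=> h Hh.
rewrite !f_out; try (absc; lra); try (field; lra).
Qed.

Lemma ftent_ge0 z : 0 <= ftent e z.
Proof.
have ie : 0 < 1 / e by apply: Rdiv_lt_0_compat; lra.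
rewrite /ftent; case: Rle_dec => /= H1; first lra.
case: Rle_dec => /= H2.
  apply: Rmult_le_pos; last by left; apply: Rinv_0_lt_compat.
  absc; lra.
case: Rle_dec => /= H3; first lra.
apply: Rmult_le_pos; last by left; apply: Rinv_0_lt_compat.
absc; lra.
Qed.

End F.


Section G.
Variables (V : finType) (adj : rel V).

Lemma ball_refl k v : v \in ball adj k v.
Proof. elim: k => [|k IH] /=; first by rewrite inE. by rewrite inE IH. Qed.

Lemma ball_S k v w : w \in ball adj k v -> w \in ball adj k.+1 v.
Proof. by move=> H /=; rewrite inE H. Qed.

Lemma ball_mono k k' v w : (k <= k')%N -> w \in ball adj k v -> w \in ball adj k' v.
Proof.
move=> /subnK <-; elim: (k' - k)%N => [|n IH] //= H.
by apply: ball_S; apply: IH.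
Qed.

Lemma ball_adj a u v w : adj v u -> w \in ball adj a u -> w \in ball adj a.+1 v.
Proof.
move=> Hvu; elim: a w => [|a IH] w /=.
  rewrite !inE => /eqP ->; apply/orP; right; apply/existsP; exists v.
  by rewrite inE eqxx Hvu.
rewrite inE => /orP [H|].
  by apply: (@ball_S a.+1); apply: IH.
rewrite inE => /existsP [x /andP [Hx Hxw]].
rewrite inE; apply/orP; right; rewrite inE; apply/existsP; exists x.
by rewrite (IH _ Hx) Hxw.
Qed.

Lemma path_ball p x : path adj x p -> last x p \in ball adj (size p) x.
Proof.
elim: p x => [|y p IH] x /=; first by rewrite inE.
move=> /andP [Hxy Hp]; exact: ball_adj Hxy (IH _ Hp).
Qed.

Hypothesis adj_conn : forall v w : V, connect adj v w.

Lemma conn_ball v w : exists n, (n < #|V|)%N /\ w \in ball adj n v.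
Proof.
have /connectP [p Hp Hl] := adj_conn v w.
move: Hl; case: (shortenP Hp) => q Hq Hu _ Hl.
exists (size q); split; last by rewrite Hl; apply: path_ball.
have := card_uniqP Hu => Hc.
have := max_card (mem (v :: q)). rewrite Hc /=. done.
Qed.

Lemma distG_ball v w : w \in ball adj (distG adj v w) v.
Proof.
have [n [Hn Hb]] := conn_ball v w.
have Hh : has (fun k => w \in ball adj k v) (iota 0 #|V|).
  apply/hasP; exists n => //; by rewrite mem_iota.
have := nth_find 0%N Hh. rewrite /distG.
move: Hh; rewrite has_find size_iota => Hlt.
by rewrite nth_iota.
Qed.

Variable tau : V -> R.


Lemma bigRmax_ge0 (I : Type) (r : seq I) (P : pred I) (F : I -> R) :
  0 <= \big[Rmax/0]_(i <- r | P i) F i.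
Proof.
elim: r => [|x r IH]; first by rewrite big_nil; lra.
rewrite big_cons; case: (P x) => //; apply: Rle_trans (Rmax_r _ _); done.
Qed.

Lemma bigRmax_ge (I : eqType) (r : seq I) (P : pred I) (F : I -> R) i :
  i \in r -> P i -> F i <= \big[Rmax/0]_(j <- r | P j) F j.
Proof.
elim: r => [|x r IH] //; rewrite inE big_cons => /orP [/eqP <-|Hr] Hi.
  by rewrite Hi; apply: Rmax_l.
case: (P x); last by apply: IH.
apply: Rle_trans (Rmax_r _ _); by apply: IH.
Qed.

Lemma tau'_ge0 v k : 0 <= tau' adj tau v k.
Proof. exact: bigRmax_ge0. Qed.

Lemma tau'_ge v k w : w \in ball adj k v -> tau v - tau w <= tau' adj tau v k.
Proof.
move=> H; rewrite /tau'; apply: bigRmax_ge => //; by rewrite mem_index_enum.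
Qed.

End G.


HB.instance Definition _ := Monoid.isComLaw.Build R 0 Rplus
  (fun a b c => esym (Rplus_assoc a b c)) Rplus_comm Rplus_0_l.

Lemma one_minus_exp u : 0 <= u <= 1 / 4 -> exp (-2 * u) <= 1 - u.
Proof.
move=> Hu.
have H1 : 1 + 2 * u <= exp (2 * u).
  case: (Req_dec u 0) => [->|Hn]; first by rewrite Rmult_0_r exp_0; lra.
  by left; apply: exp_ineq1; lra.
have Hp : 0 < exp (2 * u) by apply: exp_pos.
have -> : -2 * u = - (2 * u) by ring.
rewrite exp_Ropp.
apply (Rmult_le_reg_r (exp (2 * u))) => //.
rewrite Rinv_l; last lra.
have : 1 <= (1 - u) * (1 + 2 * u) by nra.
have : (1 - u) * (1 + 2 * u) <= (1 - u) * exp (2 * u) by apply: Rmult_le_compat_l; lra.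
lra.
Qed.

Lemma prod_bound (T : Type) (s : seq T) (d : T -> R) :
  (forall x, List.In x s -> Rabs (d x) <= 1 / 2) ->
  exp (-2 * \big[Rplus/0]_(x <- s) (d x) ^ 2) <=
  \big[Rmult/1]_(x <- s) (1 + d x) * \big[Rmult/1]_(x <- s) (1 - d x).
Proof.
elim: s => [|x s IH] H.
  rewrite !big_nil Rmult_0_r exp_0; lra.
rewrite !big_cons.
have Hx := H x (or_introl erefl).
have IH' := IH (fun y Hy => H y (or_intror Hy)).
have Hd : 0 <= d x ^ 2 <= 1 / 4.
  split; first by apply: pow2_ge_0.
  rewrite -(pow2_abs (d x)). have := Rabs_pos (d x). nra.
have E1 := one_minus_exp Hd.
rewrite Rmult_plus_distr_l exp_plus.
have Hp1 : 0 < exp (-2 * d x ^ 2) by apply: exp_pos.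
have Hp2 : 0 < exp (-2 * \big[Rplus/0]_(j <- s) d j ^ 2) by apply: exp_pos.
have -> : (1 + d x) * \big[Rmult/1]_(j <- s) (1 + d j) *
          ((1 - d x) * \big[Rmult/1]_(j <- s) (1 - d j)) =
          (1 - d x ^ 2) * (\big[Rmult/1]_(j <- s) (1 + d j) * \big[Rmult/1]_(j <- s) (1 - d j)) by ring.
apply: Rmult_le_compat; lra.
Qed.

Lemma sum_le (T : Type) (s : seq T) (f g : T -> R) :
  (forall x, List.In x s -> f x <= g x) ->
  \big[Rplus/0]_(x <- s) f x <= \big[Rplus/0]_(x <- s) g x.
Proof.
elim: s => [|x s IH] H; first by rewrite !big_nil; lra.
rewrite !big_cons; apply: Rplus_le_compat; first by apply: H; left.
by apply: IH => y Hy; apply: H; right.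
Qed.

Lemma sum_scal (T : Type) (s : seq T) (f : T -> R) c :
  \big[Rplus/0]_(x <- s) (c * f x) = c * \big[Rplus/0]_(x <- s) f x.
Proof.
elim: s => [|x s IH]; first by rewrite !big_nil; ring.
by rewrite !big_cons IH; ring.
Qed.

Lemma sum_sub (V : finType) (s : seq V) (G : V -> R) :
  uniq s -> (forall v, 0 <= G v) ->
  \big[Rplus/0]_(v <- s) G v <= \big[Rplus/0]_(v : V) G v.
Proof.
move=> Hu HG.
rewrite big_uniq // (bigID (fun v => v \in s) predT) /=.
have H0 : 0 <= \big[Rplus/0]_(i | i \notin s) G i.
  apply: (big_ind (fun x => 0 <= x)); [lra | move=> ? ? ? ?; lra | by []].
have E := Rplus_le_compat_l (\big[Rplus/0]_(i in s) G i) _ _ H0.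
rewrite Rplus_0_r in E. exact: E.
Qed.


Section Main.
Variables (V : finType) (adj : rel V).
Hypothesis adj_conn : forall v w : V, connect adj v w.
Variables (tau : V -> R) (eps : R).
Hypothesis eps_pos : 0 < eps.
Hypothesis eps_le : eps <= 1 / 2.
Variable (rk : V -> nat) (phi : V -> R) (k : nat).
Hypothesis Hk1 : (Mmax adj eps phi + 1 <= k)%N.
Hypothesis Hk2 : forall v, tau' adj tau v k <= eps / 2.

Definition Rv v := (1 + \max_(w | adj v w) rad adj eps phi w)%N.

Lemma K0 v P w : adj v P -> linked adj eps phi P w ->
  w \in ball adj (Rv v) v /\ w \in ball adj k v.
Proof.
move=> HvP HPw.
have H1 : (distG adj P w <= rad adj eps phi P)%N.
  by rewrite /rad; apply: (@leq_bigmax_cond _ (fun w => linked adj eps phi P w)).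
have H2 : w \in ball adj (distG adj P w).+1 v.
  exact: ball_adj HvP (distG_ball adj_conn P w).
have H3 : (rad adj eps phi P <= \max_(u | adj v u) rad adj eps phi u)%N.
  exact: (@leq_bigmax_cond _ (fun u => adj v u)).
have H4 : (rad adj eps phi P <= Mmax adj eps phi)%N.
  rewrite /Mmax; exact: (@leq_bigmax _ (fun v => rad adj eps phi v)).
split; apply: ball_mono H2; rewrite /Rv; lia.
Qed.

Definition I1 (tk : V -> R -> R) v := exists w, linked adj eps phi v w /\ tau w <= tk v (phi v).
Definition I2 (tk : V -> R -> R) v := exists l, RL (tk v) (phi v) l /\
  Rabs l <= 1 / 2 /\ Rabs l * eps <= tau' adj tau v (Rv v).

Lemma linked_E v P w : adj v P -> 1 - eps <= Rabs (phi v - phi P) ->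
  linked adj eps phi P w -> linked adj eps phi v w.
Proof.
move=> HvP Hd HPw; rewrite /linked; apply: connect_trans HPw.
apply: connect1; rewrite /Erel HvP /=; by case: Rle_dec.
Qed.

Lemma K1 v P s : adj v P -> (exists w, linked adj eps phi P w /\ tau w <= s) ->
  exists l, RL (mfun tau eps v (phi P) s) (phi v) l /\
  Rabs l <= 1 / 2 /\ Rabs l * eps <= tau' adj tau v (Rv v).
Proof.
move=> HvP [w [HPw Hw]].
have T0 := tau'_ge0 adj tau v (Rv v).
case: (Rle_dec s (tau v)) => Hs; last first.
  exists 0; split; last by rewrite Rabs_R0; lra.
  exists 1; split; first lra. move=> h _; rewrite /mfun.
  case: Rle_dec => //= _; ring.
pose c := Rmin (tau v - s) (eps / 2).
have c0 : 0 <= c by apply: Rmin_glb; lra.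
have c1 : c <= eps / 2 by apply: Rmin_r.
have c2 : c <= tau v - s by apply: Rmin_l.
have [lf [[d [d0 Hd]] Hlf]] := ftent_RL eps_pos eps_le (phi v - phi P).
exists (c * lf); split.
  exists d; split => // h Hh; rewrite /mfun; case: Rle_dec => //= _.
  replace (phi v + h - phi P) with ((phi v - phi P) + h) by ring.
  rewrite Hd //. rewrite /c; ring.
case: Hlf => [->|[Hy Hl]]; first by rewrite Rmult_0_r Rabs_R0; lra.
have HvW := linked_E HvP (proj1 Hy) HPw.
have [Hb _] := K0 HvP HPw.
have Ht := tau'_ge tau Hb.
rewrite Rabs_mult Hl (Rabs_pos_eq c) //.
have -> : c * (1 / eps) * eps = c by field; lra.
split; last lra.
have -> : c * (1 / eps) = c / eps by field; lra.
apply (Rmult_le_reg_r eps) => //.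
have -> : c / eps * eps = c by field; lra.
lra.
Qed.

Lemma K2 v P s : adj v P -> (exists w, linked adj eps phi P w /\ tau w <= s) ->
  exists w, linked adj eps phi v w /\ tau w <= mfun tau eps v (phi P) s (phi v).
Proof.
move=> HvP [w [HPw Hw]].
have Hvv : linked adj eps phi v v by exact: connect0.
case: (Rle_dec (1 - eps) (Rabs (phi v - phi P))) => Hd.
  exists w; split; first exact: linked_E HvP Hd HPw.
  rewrite /mfun; case: Rle_dec => /= Hs; last lra.
  have := ftent_ge0 eps_pos (phi v - phi P).
  have : 0 <= Rmin (tau v - s) (eps / 2) by apply: Rmin_glb; lra.
  nra.
exists v; split => //.
rewrite /mfun; case: Rle_dec => /= Hs; last lra.
have Hy : Rabs (phi v - phi P) < 1 - eps by lra.
rewrite f_m //; last by move: Hy; absc; lra.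
have [_ Hbk] := K0 HvP HPw.
have := tau'_ge tau Hbk. have := Hk2 v.
rewrite /Rmin; case: Rle_dec => /= ?; lra.
Qed.

Definition Inv (chosen : seq V) (tk : V -> R -> R) :=
  forall v, v \notin chosen -> I1 tk v /\ I2 tk v.

Lemma step chosen tk P : Inv chosen tk -> P \notin chosen ->
  Inv (rcons chosen P) (fun v h => if (v \in rcons chosen P) || ~~ adj v P then tk v h
        else Rmin (tk v h) (mfun tau eps v (phi P) (tk P (phi P)) h)).
Proof.
move=> HI HP v Hv.
have Hv' : v \notin chosen by move: Hv; rewrite mem_rcons inE negb_or => /andP [].
rewrite /I1 /I2 (negbTE Hv) /=.
have [[w1 [Hw1 Hw1']] [l1 [Hl1 Hl1']]] := HI v Hv'.
case Ha: (adj v P) => /=; last first.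
  by split; [exists w1 | exists l1].
have [HI1P _] := HI P HP.
split.
  have [w2 [Hw2 Hw2']] := K2 Ha HI1P.
  rewrite /Rmin; case: Rle_dec => /= _; [exists w1 | exists w2]; by [].
have [l2 [Hl2 Hl2']] := K1 Ha HI1P.
by case: (RL_min Hl1 Hl2) => H; [exists l1 | exists l2].
Qed.

Lemma foldl_some (g : V -> R) s acc P :
  foldl (fun acc v => match acc with
                      | None => Some v
                      | Some a => if better rk g v a then Some v else Some a
                      end) acc s = Some P -> acc = Some P \/ P \in s.
Proof.
elim: s acc => [|x s IH] acc /=; first by left.
move=> /IH [H|H]; last by right; rewrite inE H orbT.
case: acc H => [a|] /=; last by case=> ->; right; rewrite inE eqxx.
case: ifP => _ [->]; [right; rewrite inE eqxx | left]; by [].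
Qed.

Lemma argmin_in g s P : argminV rk g s = Some P -> P \in s.
Proof. by move=> /foldl_some [|]. Qed.

Lemma run_spec n chosen tk : Inv chosen tk ->
  (forall x, List.In x (run adj tau eps rk phi n chosen tk) -> I2 x.2 x.1) /\
  all (fun v => v \notin chosen) (map fst (run adj tau eps rk phi n chosen tk)) /\
  uniq (map fst (run adj tau eps rk phi n chosen tk)).
Proof.
elim: n chosen tk => [|n IH] chosen tk HI /=; first by [].
case E: argminV => [P|] //=.
have HP : P \notin chosen by move: (argmin_in E); rewrite mem_filter => /andP [].
have [IH1 [IH2 IH3]] := IH _ _ (step HI HP).
split.
  move=> x [<-|Hx] /=; first by have [] := HI P HP.
  exact: IH1.
rewrite HP /= IH3 andbT.
have Hall : all (fun v => v \notin chosen) (map fst (run adj tau eps rk phi n (rcons chosen P)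
   (fun v h => if (v \in rcons chosen P) || ~~ adj v P then tk v h
        else Rmin (tk v h) (mfun tau eps v (phi P) (tk P (phi P)) h)))).
  by apply: sub_all IH2 => v; rewrite mem_rcons inE negb_or => /andP [].
move: Hall => Hall.
rewrite Hall; split => //.
apply/negP => Hin; move/allP: IH2 => /(_ P Hin).
by rewrite mem_rcons inE eqxx.
Qed.

Lemma alg_spec :
  (forall x, List.In x (alg_run adj tau eps rk phi) -> I2 x.2 x.1) /\
  uniq (map fst (alg_run adj tau eps rk phi)).
Proof.
have HI : Inv [::] (fun v _ => tau v).
  move=> v _; split.
    exists v; split; [exact: connect0 | lra].
  exists 0; split; first exact: RL_const.
  rewrite Rabs_R0 Rmult_0_l; split; [lra | exact: tau'_ge0].
have [H1 [_ H3]] := run_spec #|V| HI.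
by split.
Qed.

Lemma main_ineq :
  exp (- (1 / eps ^ 2) *
       \big[Rplus/0]_(v : V) (tau' adj tau v (Rv v)) ^ 2) <=
  sqrt (Jplus adj tau eps rk phi * Jminus adj tau eps rk phi).
Proof.
have [H1 H3] := alg_spec.
set L := alg_run adj tau eps rk phi in H1 H3 *.
pose d (x : V * (V -> R -> R)) := rderiv (x.2 x.1) (phi x.1).
pose T v := tau' adj tau v (Rv v).
have Hd : forall x, List.In x L -> Rabs (d x) <= 1 / 2 /\ Rabs (d x) * eps <= T x.1.
  move=> x Hx; have [l [Hl [Hl1 Hl2]]] := H1 x Hx.
  by rewrite /d (rderiv_RL Hl).
have HP := prod_bound (d := d) (fun x Hx => proj1 (Hd x Hx)).
set Q := (1 / eps ^ 2) * \big[Rplus/0]_(v : V) T v ^ 2.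
have HS : \big[Rplus/0]_(x <- L) d x ^ 2 <= Q.
  apply: Rle_trans (sum_le (g := fun x => (1 / eps ^ 2) * T x.1 ^ 2) _) _.
    move=> x Hx; have [_ H] := Hd x Hx.
    have h0 : 0 <= Rabs (d x) * eps by apply: Rmult_le_pos; [apply: Rabs_pos | lra].
    have : (Rabs (d x) * eps) ^ 2 <= T x.1 ^ 2 by apply: pow_incr; split.
    rewrite Rpow_mult_distr pow2_abs => Hq.
    have ep : 0 < eps ^ 2 by apply: pow_lt.
    apply (Rmult_le_reg_r (eps ^ 2)) => //.
    have -> : 1 / eps ^ 2 * T x.1 ^ 2 * eps ^ 2 = T x.1 ^ 2 by field; lra.
    done.
  rewrite sum_scal /Q.
  apply: Rmult_le_compat_l.
    by left; apply: Rdiv_lt_0_compat; [lra | apply: pow_lt].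
  rewrite -(big_map fst xpredT (fun v => T v ^ 2)).
  apply: sum_sub => // v; exact: pow2_ge_0.
have HJ : exp (-2 * Q) <= Jplus adj tau eps rk phi * Jminus adj tau eps rk phi.
  apply: Rle_trans HP.
  have : -2 * Q <= -2 * \big[Rplus/0]_(x <- L) d x ^ 2 by lra.
  case/Rle_lt_or_eq_dec => [h|->]; [left; exact: exp_increasing | right]; by [].
have -> : - (1 / eps ^ 2) * \big[Rplus/0]_(v : V) tau' adj tau v (Rv v) ^ 2 = - Q by rewrite /Q /T; ring.
have Hq : exp (-2 * Q) = exp (- Q) ^ 2.
  by rewrite /= Rmult_1_r -exp_plus; congr exp; ring.
rewrite -(sqrt_pow2 (exp (- Q))); last by left; apply: exp_pos.
apply: sqrt_le_1_alt; lra.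
Qed.

End Main.

Unset Implicit Arguments.

Theorem lemma2p7
  (V : finType) (adj : rel V)
  (adj_sym : symmetric adj) (adj_irrefl : irreflexive adj)
  (adj_conn : forall v w : V, connect adj v w)
  (tau : V -> R) (tau_nonneg : forall v, 0 <= tau v)
  (eps : R) (eps_pos : 0 < eps) (eps_le : eps <= 1 / 2)
  (rk : V -> nat) (rk_inj : injective rk)
  (phi : V -> R)
  (HL : exists k : nat, (Mmax adj eps phi + 1 <= k)%N /\
                        forall v, tau' adj tau v k <= eps / 2) :
  sqrt (Jplus adj tau eps rk phi * Jminus adj tau eps rk phi) >=
  exp (- (1 / eps ^ 2) *
       \big[Rplus/0]_(v : V)
         (tau' adj tau v (1 + \max_(w | adj v w) rad adj eps phi w)%N) ^ 2).
Proof.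
have [k [Hk1 Hk2]] := HL.
apply: Rle_ge.
exact: (main_ineq adj_conn eps_pos eps_le rk Hk1 Hk2).
Qed.
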